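(* For $i\ge0$, the ring homomorphism $\phi_i:(A/\!/A(i))_*\to(A/\!/A(i-1))_*$ defined on the polynomial generators by $\phi_i(\bar\xi_k^{2^l})=\bar\xi_{k-1}^{2^l}$ for $k>1$ and $\phi_i(\bar\xi_1^{2^{i+1}})=1$ is a map of ungraded $A(i)_*$-comodules.
   Context: $A_*$ is the mod $2$ dual Steenrod algebra, $\bar\xi_k$ the conjugate of Milnor's generator $\xi_k$, $|\bar\xi_k|=2^k-1$, with coproduct $\psi(\bar\xi_k)=\sum_{k_1+k_2=k}\bar\xi_{k_1}\otimes\bar\xi_{k_2}^{2^{k_1}}$. For $i\ge-1$, $A(i)_*=\mathbb{F}_2[\bar\xi_1,\dots,\bar\xi_{i+1}]/(\bar\xi_1^{2^{i+1}},\bar\xi_2^{2^i},\dots,\bar\xi_{i+1}^2)$ is the quotient Hopf algebra of $A_*$ dual to $A(i)$, and $(A/\!/A(i))_*=A_*\square_{A(i)_*}\mathbb{F}_2=\mathbb{F}_2[\bar\xi_1^{2^{i+1}},\bar\xi_2^{2^i},\dots,\bar\xi_{i+1}^2,\bar\xi_{i+2},\bar\xi_{i+3},\dots]$, a left $A_*$-subcomodule algebra of $A_*$; it is regarded as an $A(i)_*$-comodule via $A_*\to A(i)_*$ (and likewise $(A/\!/A(i-1))_*$). *)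

(* Defs.v *)
From mathcomp Require Import all_boot.
Set Implicit Arguments. Unset Strict Implicit. Unset Printing Implicit Defensive.

(* A monomial in the \bar\xi_k (k >= 1) is a finite multiset of indices:
   the exponent of \bar\xi_k in m is [count_mem k m].  Entries are meant to
   be >= 1 (the index 0 never occurs: \bar\xi_0 = 1 is not a variable). *)
Definition mono := seq nat.
Definition expo (m : mono) (k : nat) : nat := count_mem k m.

(* An element of A_* : the sum (over F_2) of the listed monomials. *)
Definition poly := seq mono.

Definition tmono := (mono * mono)%type.
Definition tpoly := seq tmono.

(* Two tensor monomials are the same monomial iff they have the same
   exponents, i.e. their index multisets agree on each side. *)
Definition tmono_eq (a b : tmono) : bool := perm_eq a.1 b.1 && perm_eq a.2 b.2.

Definition tcoef (p : tpoly) (a : tmono) : bool := odd (count (tmono_eq a) p).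

Definition teq (p q : tpoly) : Prop := forall a : tmono, tcoef p a = tcoef q a.

Definition tone : tpoly := [:: ([::], [::])].
Definition tmul (p q : tpoly) : tpoly :=
  [seq (a.1 ++ b.1, a.2 ++ b.2) | a <- p, b <- q].

(* \bar\xi_j as a monomial, with \bar\xi_0 = 1. *)
Definition xim (j : nat) : mono := if j == 0 then [::] else [:: j].
Definition xipow (j e : nat) : mono := if j == 0 then [::] else nseq e j.

(* The coproduct on a generator:
   psi(\bar\xi_k) = sum_{k1 + k2 = k} \bar\xi_{k1} (x) \bar\xi_{k2}^{2^{k1}}. *)
Definition psi_gen (k : nat) : tpoly :=
  [seq (xim k1, xipow (k - k1) (2 ^ k1)) | k1 <- iota 0 k.+1].

Definition psi_mono (m : mono) : tpoly := foldr (fun k acc => tmul (psi_gen k) acc) tone m.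
Definition psi (x : poly) : tpoly := flatten (map psi_mono x).

(* A monomial survives in A(i)_* = F_2[\bar\xi_1..\bar\xi_{i+1}]/
   (\bar\xi_1^{2^{i+1}}, \bar\xi_2^{2^i}, ..., \bar\xi_{i+1}^2)
   iff every variable occurring is some \bar\xi_k with 1 <= k <= i+1 and
   its exponent is < 2^{i+2-k}.  Since the ideal is a monomial ideal, the
   projection A_* -> A(i)_* kills exactly the other monomials. *)
Definition in_Ai_basis (i : nat) (m : mono) : bool :=
  all (fun k => [&& 0 < k, k <= i.+1 & expo m k < 2 ^ (i.+2 - k)]) m.

(* (pi_i (x) id) : A_* (x) A_* -> A(i)_* (x) A_*  (A(i)_* represented by
   its monomial basis inside A_* ). *)
Definition proj_left (i : nat) (p : tpoly) : tpoly :=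
  [seq a <- p | in_Ai_basis i a.1].

(* x lies in (A//A(i))_* = F_2[\bar\xi_1^{2^{i+1}}, \bar\xi_2^{2^i}, ...,
   \bar\xi_{i+1}^2, \bar\xi_{i+2}, ...]: every monomial of x is a monomial
   in these polynomial generators, i.e. for k <= i+1 the exponent of
   \bar\xi_k is divisible by 2^{i+2-k}. *)
Definition in_quot_mono (i : nat) (m : mono) : bool :=
  all (fun k => (0 < k) && ((k <= i.+1) ==> (2 ^ (i.+2 - k) %| expo m k))) m.
Definition in_quot (i : nat) (x : poly) : bool := all (in_quot_mono i) x.

(* phi_i : (A//A(i))_* -> (A//A(i-1))_*, the ring homomorphism with
   phi_i(\bar\xi_k^{2^l}) = \bar\xi_{k-1}^{2^l} (k > 1) and
   phi_i(\bar\xi_1^{2^{i+1}}) = 1.  On a monomial (product of powers of the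
   polynomial generators) it drops the \bar\xi_1 factors and replaces each
   \bar\xi_k (k > 1) by \bar\xi_{k-1}.  (The index i only matters through the
   domain (A//A(i))_*.) *)
Definition phi_mono (i : nat) (m : mono) : mono := [seq k.-1 | k <- m & 1 < k].
Definition phi (i : nat) (x : poly) : poly := map (phi_mono i) x.

Definition id_tensor_phi (i : nat) (p : tpoly) : tpoly :=
  [seq (a.1, phi_mono i a.2) | a <- p].

(* Main.v *)
Require Import Defs.
From mathcomp Require Import all_boot.
From Stdlib Require Import Lia.
Set Implicit Arguments. Unset Strict Implicit. Unset Printing Implicit Defensive.

Definition cat2 (u v : tmono) : tmono := (u.1 ++ v.1, u.2 ++ v.2).

Lemma tmulE p q : tmul p q = [seq cat2 a b | a <- p, b <- q].
Proof. by []. Qed.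

Lemma tmono_eq_refl u : tmono_eq u u.
Proof. by rewrite /tmono_eq !perm_refl. Qed.

Lemma tmono_eq_sym u v : tmono_eq u v = tmono_eq v u.
Proof. by rewrite /tmono_eq perm_sym [perm_eq v.2 _]perm_sym. Qed.

Lemma tmono_eq_trans u v w : tmono_eq u v -> tmono_eq v w -> tmono_eq u w.
Proof.
rewrite /tmono_eq => /andP[h1 h2] /andP[h3 h4].
by rewrite (perm_trans h1 h3) (perm_trans h2 h4).
Qed.

Lemma tmono_eqR a u v : tmono_eq u v -> tmono_eq a u = tmono_eq a v.
Proof.
move=> h; apply/idP/idP => h'; first exact (tmono_eq_trans h' h).
by apply: (tmono_eq_trans h'); rewrite tmono_eq_sym.
Qed.

Definition cinv (Q : pred tmono) := forall u v, tmono_eq u v -> Q u = Q v.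

Lemma cinv_eq a : cinv (tmono_eq a).
Proof. by move=> u v; apply: tmono_eqR. Qed.

Lemma count_sum (T : Type) (Q : pred T) s : count Q s = \sum_(x <- s) Q x.
Proof. by elim: s => [|x s IH]; rewrite ?big_nil ?big_cons //= IH. Qed.

Lemma teq_refl p : teq p p. Proof. by []. Qed.
Lemma teq_sym p q : teq p q -> teq q p. Proof. by move=> h a; rewrite h. Qed.
Lemma teq_trans p q r : teq p q -> teq q r -> teq p r.
Proof. by move=> h1 h2 a; rewrite h1 h2. Qed.

Lemma teq_cat p p' q q' : teq p p' -> teq q q' -> teq (p ++ q) (p' ++ q').
Proof. by move=> h1 h2 a; rewrite /tcoef !count_cat !oddD -!/(tcoef _ _) h1 h2. Qed.

Lemma key_gen n (Q : pred tmono) p q : cinv Q -> size p + size q <= n -> teq p q ->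
  odd (count Q p) = odd (count Q q).
Proof.
move=> HQ; elim: n p q => [|n IH] p q.
  by case: p => [|? ?] //; case: q.
move=> Hs Hpq.
have [E|[u0 u0in]] : p ++ q = [::] \/ exists u0, u0 \in p ++ q.
  have gen (s : seq tmono) : s = [::] \/ exists u0, u0 \in s.
    by case: s => [|x r]; [left|right; exists x; rewrite mem_head].
  exact: gen.
  by case: p Hs Hpq E => [|? ?] //; case: q.
set P0 := tmono_eq u0.
have split s : count Q s = count Q [seq x <- s | P0 x] + count Q [seq x <- s | predC P0 x].
  by rewrite -count_cat ((permP (permEl (perm_filterC P0 s))) Q).
have c1 s : count Q [seq x <- s | P0 x] = if Q u0 then count P0 s else 0.
  rewrite count_filter; case: ifP => hq.
    by apply: eq_count => v /=; case h: (P0 v); rewrite ?andbF //= -(HQ _ _ h) hq.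
  by rewrite -(count_pred0 s); apply: eq_count => v /=; case h: (P0 v); rewrite ?andbF //= -(HQ _ _ h) hq.
rewrite (split p) (split q) !oddD c1 c1.
have Ht : teq [seq x <- p | predC P0 x] [seq x <- q | predC P0 x].
  move=> a; rewrite /tcoef !count_filter.
  case ha: (tmono_eq a u0).
    have e : predI (tmono_eq a) (predC P0) =1 pred0.
      move=> v /=; case h: (tmono_eq a v) => //=.
      apply/negPn; apply: (tmono_eq_trans _ h); by rewrite tmono_eq_sym.
    by rewrite !(eq_count e) !count_pred0.
  have e : predI (tmono_eq a) (predC P0) =1 tmono_eq a.
    move=> v /=; case h: (tmono_eq a v) => //=.
    apply/negP => h'; move/negP: ha; apply; apply: (tmono_eq_trans h); by rewrite tmono_eq_sym.
  by rewrite !(eq_count e); apply: Hpq.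
rewrite (IH _ _ _ Ht); last first.
  move: Hs; rewrite !size_filter -[size p](count_predC P0) -[size q](count_predC P0).
  have : 0 < count P0 (p ++ q) by rewrite -has_count; apply/hasP; exists u0 => //; exact: tmono_eq_refl.
  rewrite count_cat => h1 h2.
  move: (count P0 p) (count P0 q) (count (predC P0) p) (count (predC P0) q) h1 h2 => x y z w.
  move=> /ltP h1 /leP h2; apply/leP; rewrite -!plusE in h1 h2 *; lia.
case: (Q u0) => //; have := Hpq u0; rewrite /tcoef; move=> ->. done.
Qed.

Lemma key (Q : pred tmono) p q : cinv Q -> teq p q -> odd (count Q p) = odd (count Q q).
Proof. by move=> HQ; apply: (key_gen (n := size p + size q)). Qed.

Lemma map_teq f p q : (forall u v, tmono_eq u v -> tmono_eq (f u) (f v)) ->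
  teq p q -> teq (map f p) (map f q).
Proof.
move=> Hf Hpq a; rewrite /tcoef !count_map; apply: key Hpq => u v huv /=.
by apply: tmono_eqR; apply: Hf.
Qed.

Lemma filter_teq (B : pred tmono) p q : cinv B -> teq p q -> teq (filter B p) (filter B q).
Proof.
move=> HB Hpq a; rewrite /tcoef !count_filter; apply: key Hpq => u v huv /=.
by rewrite (tmono_eqR a huv) (HB _ _ huv).
Qed.

Lemma cat2_eq u u' v v' : tmono_eq u u' -> tmono_eq v v' -> tmono_eq (cat2 u v) (cat2 u' v').
Proof.
rewrite /tmono_eq /cat2 /= => /andP[h1 h2] /andP[h3 h4].
by rewrite (perm_cat h1 h3) (perm_cat h2 h4).
Qed.

Lemma cat2C u v : tmono_eq (cat2 u v) (cat2 v u).
Proof. by rewrite /tmono_eq /cat2 /=; apply/andP; split; apply: permEl; apply: perm_catC. Qed.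

Lemma cat2A u v w : cat2 (cat2 u v) w = cat2 u (cat2 v w).
Proof. by rewrite /cat2 /= !catA. Qed.

Lemma count_tmul (Q : pred tmono) p q :
  count Q (tmul p q) = \sum_(u <- p) \sum_(v <- q) Q (cat2 u v).
Proof. by rewrite count_sum tmulE big_allpairs_dep. Qed.

Lemma odd_sum (T : Type) (F : T -> nat) s :
  odd (\sum_(x <- s) F x) = odd (count (fun x => odd (F x)) s).
Proof. by elim: s => [|x s IH]; rewrite ?big_nil ?big_cons //= oddD IH; case: (odd (F x)). Qed.

Lemma tmul_teq p p' q q' : teq p p' -> teq q q' -> teq (tmul p q) (tmul p' q').
Proof.
move=> Hp Hq a; rewrite /tcoef !count_tmul !odd_sum.
apply: etrans (_ : odd (count (fun u => odd (\sum_(v <- q) tmono_eq a (cat2 u v))) p') = _).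
  apply: key Hp => u u' hu; congr odd; apply: eq_bigr => v _.
  by rewrite (tmono_eqR a (cat2_eq hu (tmono_eq_refl v))).
congr odd; apply: eq_count => u /=; rewrite -!count_sum.
apply: key Hq => v v' hv; apply: tmono_eqR; exact: cat2_eq (tmono_eq_refl u) hv.
Qed.

Lemma tmulC p q : teq (tmul p q) (tmul q p).
Proof.
move=> a; rewrite /tcoef !count_tmul exchange_big /=; congr odd.
apply: eq_bigr => v _; apply: eq_bigr => u _; by rewrite (tmono_eqR a (cat2C u v)).
Qed.

Lemma tmulA p q r : teq (tmul (tmul p q) r) (tmul p (tmul q r)).
Proof.
move=> a; rewrite /tcoef !count_tmul; congr odd.
rewrite tmulE big_allpairs_dep; apply: eq_bigr => u _.
rewrite tmulE big_allpairs_dep; apply: eq_bigr => v _.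
by apply: eq_bigr => w _; rewrite cat2A.
Qed.

Lemma tmul_cons u p q : tmul (u :: p) q = map (cat2 u) q ++ tmul p q.
Proof. by []. Qed.

Lemma phi_cat i a b : phi_mono i (a ++ b) = phi_mono i a ++ phi_mono i b.
Proof. by rewrite /phi_mono filter_cat map_cat. Qed.

Lemma phi_perm i a b : perm_eq a b -> perm_eq (phi_mono i a) (phi_mono i b).
Proof. by move=> h; rewrite /phi_mono; apply: perm_map; apply: perm_filter. Qed.

Lemma F_teq i p q : teq p q -> teq (id_tensor_phi i p) (id_tensor_phi i q).
Proof.
apply: map_teq => u v /andP[h1 h2]; rewrite /tmono_eq /= h1 /=; exact: phi_perm.
Qed.

Lemma F_tmul i p q : id_tensor_phi i (tmul p q) = tmul (id_tensor_phi i p) (id_tensor_phi i q).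
Proof.
elim: p => [|u p IH] //; rewrite /id_tensor_phi in IH *.
rewrite tmul_cons map_cat IH /= tmul_cons -!map_comp; congr (_ ++ _).
by apply: eq_map => v /=; rewrite /cat2 /= phi_cat.
Qed.

Lemma tmul1 q : tmul tone q = q.
Proof.
rewrite /tone tmul_cons cats0 /cat2 /=; rewrite -[RHS]map_id; apply: eq_map; by case.
Qed.

Lemma psi_cons k m : psi_mono (k :: m) = tmul (psi_gen k) (psi_mono m).
Proof. by []. Qed.

Lemma psi_cat a b : teq (psi_mono (a ++ b)) (tmul (psi_mono a) (psi_mono b)).
Proof.
elim: a => [|k a IH] /=; first by rewrite -/(psi_mono b) tmul1.
rewrite -!/(psi_mono _) -/(psi_mono (a ++ b)) -/(psi_mono a).
apply: teq_trans (tmul_teq (teq_refl _) IH) _.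
apply: teq_sym; exact: tmulA.
Qed.

Lemma psi_perm m m' : perm_eq m m' -> teq (psi_mono m) (psi_mono m').
Proof.
elim: m m' => [|k m IH] m' h.
  by move: h; rewrite perm_sym => /perm_nilP ->.
have hk : k \in m' by rewrite -(perm_mem h) mem_head.
move: h; case/splitPr: hk => t1 t2 h.
have h2 : perm_eq m (t1 ++ t2).
  by rewrite -(perm_cons k); apply: (perm_trans h); rewrite -cat1s; apply: permEl; apply: perm_catCA.
apply: teq_trans (_ : teq _ (tmul (psi_gen k) (tmul (psi_mono t1) (psi_mono t2)))) _.
  rewrite psi_cons; apply: tmul_teq => //; apply: teq_trans (IH _ h2) _; exact: psi_cat.
apply: teq_sym; apply: teq_trans (psi_cat _ _) _.
rewrite psi_cons.
apply: teq_trans (teq_sym (tmulA _ _ _)) _.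
apply: teq_trans (tmul_teq (tmulC _ _) (teq_refl _)) _.
apply: tmulA.
Qed.

Lemma expo_perm s s' k : perm_eq s s' -> expo s k = expo s' k.
Proof. by move/permP => h; apply: h. Qed.

Lemma basis_perm i s s' : perm_eq s s' -> in_Ai_basis i s = in_Ai_basis i s'.
Proof.
move=> h; rewrite /in_Ai_basis (perm_all _ h); apply: eq_all => k.
by rewrite (expo_perm k h).
Qed.

Definition Bp i : pred tmono := fun a => in_Ai_basis i a.1.

Lemma Bp_cinv i : cinv (Bp i).
Proof. by move=> u v /andP[h _]; apply: basis_perm. Qed.

Lemma proj_teq i p q : teq p q -> teq (proj_left i p) (proj_left i q).
Proof. exact: (filter_teq (Bp_cinv i)). Qed.

Lemma basis_cat i s t : in_Ai_basis i (s ++ t) -> in_Ai_basis i s && in_Ai_basis i t.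
Proof.
rewrite /in_Ai_basis all_cat => /andP[h1 h2]; apply/andP; split.
  apply: sub_all h1 => k /and3P[-> -> h] /=; apply: leq_ltn_trans h.
  by rewrite /expo count_cat leq_addr.
apply: sub_all h2 => k /and3P[-> -> h] /=; apply: leq_ltn_trans h.
by rewrite /expo count_cat leq_addl.
Qed.

Lemma proj_tmul i p q :
  teq (proj_left i (tmul p q)) (proj_left i (tmul (proj_left i p) (proj_left i q))).
Proof.
move=> a; rewrite /tcoef /proj_left !count_filter !count_tmul; congr odd.
rewrite big_filter [RHS]big_mkcond /=; apply: eq_bigr => u _.
rewrite big_filter [in RHS]big_mkcond /=; case hu: (in_Ai_basis i u.1).
  apply: eq_bigr => v _; case hv: (in_Ai_basis i v.1) => //=.
  have hc := @basis_cat i u.1 v.1; rewrite hu hv /= in hc.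
  by move: hc; rewrite /cat2 /=; case: (in_Ai_basis i (u.1 ++ v.1)) => [/(_ isT)|_] //; rewrite andbF.
apply: big1 => v _.
have hc := @basis_cat i u.1 v.1; rewrite hu /= in hc.
by move: hc; rewrite /cat2 /=; case: (in_Ai_basis i (u.1 ++ v.1)) => [/(_ isT)|_] //; rewrite andbF.
Qed.

Lemma F_proj i p : id_tensor_phi i (proj_left i p) = proj_left i (id_tensor_phi i p).
Proof. by rewrite /id_tensor_phi /proj_left filter_map. Qed.

Definition eqv i p q := teq (proj_left i p) (proj_left i q).

Lemma eqv_trans i p q r : eqv i p q -> eqv i q r -> eqv i p r.
Proof. exact: teq_trans. Qed.

Lemma teq_eqv i p q : teq p q -> eqv i p q.
Proof. exact: proj_teq. Qed.

Lemma eqv_tmul i p p' q q' : eqv i p p' -> eqv i q q' -> eqv i (tmul p q) (tmul p' q').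
Proof.
move=> h1 h2; rewrite /eqv; apply: teq_trans (proj_tmul _ _ _) _.
apply: teq_trans _ (teq_sym (proj_tmul _ _ _)).
by apply: proj_teq; apply: tmul_teq.
Qed.

Definition T i m := eqv i (id_tensor_phi i (psi_mono m)) (psi_mono (phi_mono i m)).

Lemma T_nil i : T i [::].
Proof. by []. Qed.

Lemma T_cat i a b : T i a -> T i b -> T i (a ++ b).
Proof.
move=> ha hb; rewrite /T.
apply: eqv_trans (teq_eqv _ (F_teq _ (psi_cat _ _))) _.
rewrite F_tmul; apply: eqv_trans (eqv_tmul ha hb) _.
by rewrite phi_cat; apply: teq_eqv; apply: teq_sym; apply: psi_cat.
Qed.

Lemma T_perm i m m' : perm_eq m m' -> T i m -> T i m'.
Proof.
move=> h hm; rewrite /T.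
have h' : perm_eq m' m by rewrite perm_sym.
apply: eqv_trans (teq_eqv _ (F_teq _ (psi_perm h'))) _.
apply: eqv_trans hm _.
by apply: teq_eqv; apply: psi_perm; apply: phi_perm.
Qed.

Lemma odd_sq_sum (X : Type) (F : X -> X -> nat) s : (forall u v, F u v = F v u) ->
  odd (\sum_(u <- s) \sum_(v <- s) F u v) = odd (\sum_(u <- s) F u u).
Proof.
move=> HF; elim: s => [|x s IH]; first by rewrite !big_nil.
have e : \sum_(u <- s) \sum_(v <- x :: s) F u v = \sum_(u <- s) F u x + \sum_(u <- s) \sum_(v <- s) F u v.
  by rewrite -big_split; apply: eq_bigr => u _; rewrite big_cons.
rewrite big_cons e big_cons [in RHS]big_cons /= !oddD -IH.
have -> : \sum_(i <- s) F i x = \sum_(v <- s) F x v by apply: eq_bigr => u _; rewrite HF.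
by case: (odd (F x x)); case: (odd (\sum_(v <- s) F x v)); case: (odd (\sum_(u <- s) \sum_(v <- s) F u v)).
Qed.

Lemma sq_teq p : teq (tmul p p) (map (fun u => cat2 u u) p).
Proof.
move=> a; rewrite /tcoef count_tmul count_map count_sum.
apply: odd_sq_sum => u v; by rewrite (tmono_eqR a (cat2C u v)).
Qed.

Definition pw n (u : tmono) : tmono := (flatten (nseq n u.1), flatten (nseq n u.2)).

Lemma flatten_nseqD (X : Type) n1 n2 (s : seq X) :
  flatten (nseq (n1 + n2) s) = flatten (nseq n1 s) ++ flatten (nseq n2 s).
Proof. by rewrite nseqD flatten_cat. Qed.

Lemma tmul_tone p : tmul p tone = map (pw 1) p.
Proof. by elim: p => [|u p IH] //; rewrite tmul_cons IH. Qed.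

Lemma frob s k : teq (psi_mono (nseq (2 ^ s) k)) (map (pw (2 ^ s)) (psi_gen k)).
Proof.
elim: s => [|s IH].
  by rewrite expn0 /= -/(psi_mono [::]) /= tmul_tone.
rewrite expnS mul2n -addnn nseqD.
apply: teq_trans (psi_cat _ _) _.
apply: teq_trans (sq_teq _) _.
apply: teq_trans (map_teq (fun u v h => cat2_eq h h) IH) _.
rewrite -map_comp; rewrite (@eq_map _ _ _ (pw (2 ^ s + 2 ^ s))) //.
by move=> u; rewrite /pw /cat2 /= !flatten_nseqD.
Qed.

Lemma flatten_nseq_xipow n j e : flatten (nseq n (xipow j e)) = xipow j (n * e).
Proof.
rewrite /xipow; case: (j == 0); elim: n => [|n IH] //=.
by rewrite IH mulSn nseqD.
Qed.

Lemma xim_xipow c : xim c = xipow c 1.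
Proof. by rewrite /xim /xipow; case: (c == 0). Qed.

Lemma phi_xipow i j e : phi_mono i (xipow j e) = xipow j.-1 e.
Proof.
rewrite /phi_mono /xipow; case: j => [|[|j]] //=.
  by rewrite filter_nseq.
by rewrite filter_nseq /= mul1n map_nseq.
Qed.

Lemma iotaS0 k : iota 0 k.+1 = iota 0 k ++ [:: k].
Proof. by rewrite -addn1 iotaD. Qed.

Lemma T_gen i k : 0 < k -> T i (nseq (2 ^ (i.+2 - k)) k).
Proof.
move=> k0; set N := 2 ^ (i.+2 - k).
pose h c : tmono := (xipow c N, xipow (k - c).-1 (N * 2 ^ c)).
have L : teq (id_tensor_phi i (psi_mono (nseq N k))) (map h (iota 0 k.+1)).
  apply: teq_trans (F_teq _ (frob _ _)) _.
  rewrite /id_tensor_phi /psi_gen -!map_comp (@eq_map _ _ _ h) //.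
  move=> c /=; by rewrite /pw /= xim_xipow !flatten_nseq_xipow phi_xipow muln1.
have R : teq (psi_mono (phi_mono i (nseq N k))) (map h (iota 0 k)).
  have -> : nseq N k = xipow k N by rewrite /xipow eqn0Ngt k0.
  rewrite phi_xipow; move: (k0); rewrite leq_eqVlt => /orP[/eqP e|k1].
    by rewrite /h -e.
  rewrite /xipow; have -> : (k.-1 == 0) = false by rewrite -subn1 subn_eq0 leqNgt k1.
  apply: teq_trans (frob _ _) _.
  rewrite /psi_gen prednK // -map_comp (@eq_map _ _ _ h) //.
  by move=> c /=; rewrite /pw /= xim_xipow !flatten_nseq_xipow muln1 /h -predn_sub.
rewrite /T /eqv; apply: teq_trans (proj_teq _ L) _; apply: teq_trans _ (proj_teq _ (teq_sym R)).
rewrite iotaS0 map_cat /proj_left filter_cat /=.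
suff -> : in_Ai_basis i (xipow k N) = false by rewrite cats0.
clear L R; rewrite /xipow eqn0Ngt k0 /=.
rewrite /in_Ai_basis all_nseq expn_eq0 /= /expo count_nseq /= eqxx mul1n ltnn.
by rewrite !andbF.
Qed.

Lemma count_filter1 (a : pred nat) k s :
  count a [seq x <- s | pred1 k x] = a k * count (pred1 k) s.
Proof.
elim: s => [|x s IH] /=; first by rewrite muln0.
case: eqP => [->|_] /=; rewrite IH //.
by rewrite mulnS.
Qed.

Lemma T_all i n m : size m <= n ->
  (forall k, k \in m -> 0 < k /\ 2 ^ (i.+2 - k) %| expo m k) -> T i m.
Proof.
elim: n m => [|n IH] m.
  by case: m.
case: m => [|k r]; first by move=> _ _; exact: T_nil.
set m0 := k :: r => Hs Hm.
have [k0 dN] := Hm k (mem_head _ _).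
set N := 2 ^ (i.+2 - k) in dN *.
set e := expo m0 k in dN *.
have e0 : 0 < e by rewrite /e /expo /= eqxx.
have Ne : N <= e by apply: dvdn_leq.
have N0 : 0 < N by rewrite expn_gt0.
set rest := [seq x <- m0 | predC (pred1 k) x] ++ nseq (e - N) k.
have crest (a : pred nat) : count a rest = count (predI a (predC (pred1 k))) m0 + a k * (e - N).
  by rewrite /rest count_cat count_filter count_nseq.
have Hperm : perm_eq (nseq N k ++ rest) m0.
  apply/permP => a; rewrite count_cat crest count_nseq addnCA -mulnDr subnKC //.
  rewrite -((permP (permEl (perm_filterC (pred1 k) m0))) a) count_cat count_filter1.
  by rewrite count_filter addnC.
apply: T_perm Hperm _; apply: T_cat; first exact: T_gen.
apply: (IH rest).
  rewrite -ltnS; apply: leq_trans Hs.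
  have -> : size m0 = e + count (predC (pred1 k)) m0 by rewrite count_predC.
  rewrite /rest size_cat size_filter size_nseq addnC ltn_add2r.
  by rewrite -subn_gt0 subKn // N0.
move=> k'; rewrite mem_cat mem_nseq mem_filter /= => hk'.
have k'in : k' \in m0 by case/orP: hk' => [/andP[_ ->]|/andP[_ /eqP ->]] //; rewrite mem_head.
have [k'0 dk'] := Hm k' k'in; split => //.
rewrite /expo crest.
case: (eqVneq k' k) => [->|ne].
  rewrite (@eq_count _ _ pred0) ?count_pred0 /=; last by move=> x /=; case: eqP => //= ->; rewrite eqxx.
  by rewrite eqxx mul1n dvdn_sub.
rewrite (@eq_count _ _ (pred1 k')); last first.
  by move=> x /=; case: eqP => //= ->; rewrite ne.
rewrite (_ : pred1 k' k = false) ?mul0n ?addn0 //; by rewrite /= eq_sym (negbTE ne).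
Qed.

Lemma T_quot i m : in_quot_mono i m -> T i m.
Proof.
move=> /allP H; apply: (T_all (n := size m)) => // k /H /andP[k0 hk]; split => //.
case: (leqP k i.+1) hk => [_ /= //|lt _].
by rewrite (_ : i.+2 - k = 0) ?expn0 ?dvd1n //; apply/eqP; rewrite subn_eq0.
Qed.

Theorem lemma5p1 (i : nat) (x : poly) :
  in_quot i x ->
  teq (id_tensor_phi i (proj_left i (psi x))) (proj_left i (psi (phi i x))).
Proof.
rewrite F_proj; elim: x => [|m x IH] //= /andP[hm hx].
rewrite /psi /= -!/(psi _) /id_tensor_phi map_cat -/(id_tensor_phi i _) -/(id_tensor_phi i _).
rewrite /proj_left !filter_cat -!/(proj_left _ _).
apply: teq_cat; last exact: IH.
exact: T_quot.
Qed.
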